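(* Let $G:=|\cdot|$ on $\mathbb{R}$ and $(x^*,q^* )\in\operatorname{graph}\partial G$. Then for every $\gamma>0$, for all $x\in\big[(-1-q^* )/\gamma,\,(1-q^* )/\gamma\big]$ and all $q\in\partial G(x)$, \[ \inf_{\bar x\in(\partial G)^{-1}(q^* )}(q-q^* )(x-\bar x)\ge\gamma\operatorname{dist}^2(x,(\partial G)^{-1}(q^* )), \] i.e. $\partial G$ is $(I,\gamma I)$-strongly submonotone with the set $\mathcal{U}=[(-1-q^* )/\gamma,(1-q^* )/\gamma]$.
   Context: $\partial G$ is the convex subdifferential of the absolute value ($\partial G(x)=\{\operatorname{sign}x\}$ for $x\ne0$, $\partial G(0)=[-1,1]$); $(\partial G)^{-1}(q^* )=\{x:q^*\in\partial G(x)\}$; $\operatorname{dist}(x,A)=\inf_{a\in A}|x-a|$. *)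

(* Defs.v *)
From Stdlib Require Import Reals.
From Coquelicot Require Import Coquelicot.
Open Scope R_scope.

Definition G (x : R) : R := Rabs x.

Definition subdiffG (x q : R) : Prop := forall y : R, G y >= G x + q * (y - x).

Definition subdiffG_inv (qs : R) : R -> Prop := fun x => subdiffG x qs.

Definition inf_over (A : R -> Prop) (f : R -> R) : Rbar :=
  Glb_Rbar (fun v => exists a, A a /\ v = f a).

Definition distR (x : R) (A : R -> Prop) : Rbar := inf_over A (fun a => Rabs (x - a)).

(* Main.v *)
Require Import Defs.
From Stdlib Require Import Reals Lra Psatz.
From Coquelicot Require Import Coquelicot.
Open Scope R_scope.

Lemma sub_facts x q : subdiffG x q ->
  (0 < x -> q = 1) /\ (x < 0 -> q = -1) /\ -1 <= q <= 1.
Proof.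
  unfold subdiffG, G; intro H.
  pose proof (H (x+1)) as H1. pose proof (H (x-1)) as H2.
  pose proof (H 0) as H3. pose proof (H (2*x)) as H4.
  revert H1 H2 H3 H4.
  unfold Rabs; repeat destruct Rcase_abs; intros; repeat split; intros; nra.
Qed.

Lemma zero_in qs : -1 <= qs <= 1 -> subdiffG 0 qs.
Proof.
  intros Hq y; unfold G; unfold Rabs; repeat destruct Rcase_abs; nra.
Qed.

Theorem lemma5p11 (xs qs : R) (Hgraph : subdiffG xs qs) :
  forall gamma : R, 0 < gamma ->
  forall x : R, (-1 - qs) / gamma <= x <= (1 - qs) / gamma ->
  forall q : R, subdiffG x q ->
  Rbar_le (Rbar_mult (Finite gamma)
                     (Rbar_mult (distR x (subdiffG_inv qs)) (distR x (subdiffG_inv qs))))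
          (inf_over (subdiffG_inv qs) (fun xb => (q - qs) * (x - xb))).
Proof.
  intros gamma Hg x [Hx1 Hx2] q Hq.
  destruct (sub_facts _ _ Hgraph) as [_ [_ Hqs]].
  destruct (sub_facts _ _ Hq) as [Hq1 [Hq2 Hq3]].
  assert (Hl : -1 - qs <= gamma * x).
  { apply (Rmult_le_compat_l gamma) in Hx1; [|lra].
    field_simplify in Hx1; lra. }
  assert (Hu : gamma * x <= 1 - qs).
  { apply (Rmult_le_compat_l gamma) in Hx2; [|lra].
    field_simplify in Hx2; lra. }
  assert (Hd : distR x (subdiffG_inv qs) = Finite (Rabs x)).
  { unfold distR, inf_over.
    apply is_glb_Rbar_unique. split.
    - intros v [a [Ha ->]]. simpl.
      destruct (sub_facts _ _ Ha) as [Ha1 [Ha2 _]].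
      destruct (Rtotal_order a 0) as [h|[h|h]].
      + specialize (Ha2 h). subst qs.
        unfold Rabs; repeat destruct Rcase_abs; nra.
      + subst a. rewrite Rminus_0_r. apply Rle_refl.
      + specialize (Ha1 h). subst qs.
        unfold Rabs; repeat destruct Rcase_abs; nra.
    - intros b Hb. apply Hb. exists 0. split.
      + apply zero_in; exact Hqs.
      + rewrite Rminus_0_r; reflexivity. }
  rewrite Hd.
  replace (Rbar_mult (Finite gamma) (Rbar_mult (Finite (Rabs x)) (Finite (Rabs x))))
    with (Finite (gamma * (Rabs x * Rabs x))) by reflexivity.
  unfold inf_over.
  destruct (Glb_Rbar_correct (fun v => exists a, subdiffG_inv qs a /\ v = (q - qs) * (x - a))) as [_ Hglb].
  apply Hglb. intros v [a [Ha ->]]. simpl.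
  destruct (sub_facts _ _ Ha) as [Ha1 [Ha2 _]].
  assert (Hxx : Rabs x * Rabs x = x * x).
  { unfold Rabs; destruct Rcase_abs; nra. }
  rewrite Hxx.
  destruct (Rtotal_order x 0) as [h|[h|h]].
  - specialize (Hq2 h); subst q.
    destruct (Rtotal_order a 0) as [h'|[h'|h']].
    + specialize (Ha2 h'); subst qs. nra.
    + subst a. nra.
    + specialize (Ha1 h'); subst qs. nra.
  - subst x.
    destruct (Rtotal_order a 0) as [h'|[h'|h']].
    + specialize (Ha2 h'); subst qs. nra.
    + subst a. nra.
    + specialize (Ha1 h'); subst qs. nra.
  - specialize (Hq1 h); subst q.
    destruct (Rtotal_order a 0) as [h'|[h'|h']].
    + specialize (Ha2 h'); subst qs. nra.
    + subst a. nra.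
    + specialize (Ha1 h'); subst qs. nra.
Qed.
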